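(* Let $\mathcal{A}$ be the family of all Lebesgue-measurable subsets $A\subseteq(0,\infty)$ with $\lambda(A)\le\sqrt{\inf A}$. For measurable $f:(0,\infty)\to[0,\infty]$ set $\rho_Y(f)=\sup_{A\in\mathcal{A}}\int_A f(t)\,dt$. Then $\rho_Y$ is a function norm, the function space $Y$ it generates is a Banach space, and $Y$ is not essentially subrearrangement-invariant.
   Context: $\lambda$ is Lebesgue measure on $(0,\infty)$, with its usual order. A function norm on $(0,\infty)$ is a map $\rho$ from nonnegative measurable functions into $[0,\infty]$ that is subadditive, positively homogeneous, and vanishes exactly on functions that are $0$ a.e.; the function space consists of a.e.-classes of measurable $f:(0,\infty)\to[-\infty,\infty]$ with $\|f\|:=\rho(|f|)<\infty$. $\mathbb{MO}(E,F)$ is the set of strictly increasing bijections $m:E\to F$ such that $m$ and $m^{-1}$ are measure-preserving (preimages of measurable sets are measurable of equal measure). A function space $X$ on $(0,\infty)$ is subrearrangement-invariant if $\|f\circ m\|_X=\|f\mathbf{1}_F\|_X$ for every measurable $F\subseteq(0,\infty)$, every $m\in\mathbb{MO}((0,\infty),F)$ and every $f\in X$; it is essentially subrearrangement-invariant if it admits an equivalent subrearrangement-invariant norm. *)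

(* Defs.v *)
From HB Require Import structures.
From mathcomp Require Import all_boot all_order all_algebra.
From mathcomp Require Import all_classical all_reals all_analysis measurable_realfun.
Set Implicit Arguments. Unset Strict Implicit. Unset Printing Implicit Defensive.
Import Order.TTheory GRing.Theory Num.Theory.
Local Open Scope classical_set_scope.
Local Open Scope ring_scope.

(* The real line equipped with the Lebesgue (i.e. completed, Caratheodory)
   sigma-algebra; definitionally this is R. *)
Definition LR (R : realType) : measurableType _ :=
  caratheodory_type (@wlength R idfun)^*%mu.

Section Defs.
Context {R : realType}.
Local Notation T := (LR R).
Local Open Scope ereal_scope.

Definition toR (x : T) : R := x.

Definition lam : set T -> \bar R := @completed_lebesgue_measure R.

Definition pos : set T := [set x | (0 < toR x)%R].

(* Functions on (0,oo) are represented by functions T -> \bar R vanishing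
   outside (0,oo). *)
Definition supported (f : T -> \bar R) : Prop := forall x, ~ pos x -> f x = 0.

Definition nnmf (f : T -> \bar R) : Prop :=
  [/\ measurable_fun pos f, (forall x, pos x -> 0 <= f x) & supported f].

Definition absf (f : T -> \bar R) : T -> \bar R := fun x => `|f x|.

Definition function_norm (rho : (T -> \bar R) -> \bar R) : Prop :=
  [/\ (forall f, nnmf f -> 0 <= rho f),
      (forall f g, nnmf f -> nnmf g -> rho (fun x => f x + g x) <= rho f + rho g),
      (forall (a : R) f, (0 <= a)%R -> nnmf f ->
          rho (fun x => a%:E * f x) = a%:E * rho f) &
      (forall f, nnmf f -> (rho f = 0 <-> {ae lam, forall x, pos x -> f x = 0}))].

(* membership in the function space generated by rho; its norm is rho (absf f) *)
Definition in_space (rho : (T -> \bar R) -> \bar R) (f : T -> \bar R) : Prop :=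
  [/\ measurable_fun pos f, supported f & rho (absf f) < +oo].

Definition banach (rho : (T -> \bar R) -> \bar R) : Prop :=
  forall u : nat -> T -> \bar R, (forall n, in_space rho (u n)) ->
  (forall e : R, (0 < e)%R -> exists N : nat, forall m n : nat, (N <= m)%N -> (N <= n)%N ->
      rho (absf (fun x => u n x - u m x)) <= e%:E) ->
  exists f, in_space rho f /\
    (forall e : R, (0 < e)%R -> exists N : nat, forall n : nat, (N <= n)%N ->
      rho (absf (fun x => u n x - f x)) <= e%:E).

Definition MO (F : set T) (m : T -> T) : Prop :=
  [/\ set_bij pos F m,
      (forall x y, pos x -> pos y -> (toR x < toR y)%R -> (toR (m x) < toR (m y))%R),
      (forall B, measurable B -> B `<=` F ->
          measurable (pos `&` m @^-1` B) /\ lam (pos `&` m @^-1` B) = lam B) &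
      (forall B, measurable B -> B `<=` pos ->
          measurable (m @` B) /\ lam (m @` B) = lam B)].

Definition subRI (sigma : (T -> \bar R) -> \bar R) : Prop :=
  forall (F : set T) (m : T -> T) (f : T -> \bar R),
    measurable F -> F `<=` pos -> MO F m -> in_space sigma f ->
    sigma (absf (fun x => if `[< pos x >] then f (m x) else 0)) =
    sigma (absf (fun x => if `[< F x >] then f x else 0)).

Definition ess_subRI (rho : (T -> \bar R) -> \bar R) : Prop :=
  exists sigma : (T -> \bar R) -> \bar R,
    [/\ function_norm sigma,
        (exists c C : R, [/\ (0 < c)%R, (0 < C)%R &
           forall f, nnmf f -> c%:E * rho f <= sigma f /\ sigma f <= C%:E * rho f]) &
        subRI sigma].

Definition famA (A : set T) : Prop :=
  [/\ measurable A, A `<=` pos & lam A <= (Num.sqrt (inf (toR @` A)))%:E].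

Definition rhoY (f : T -> \bar R) : \bar R :=
  ereal_sup [set \int[lam]_(x in A) f x | A in famA].

End Defs.

(* Main.v *)
Require Import Defs.
From HB Require Import structures.
From mathcomp Require Import all_boot all_order all_algebra.
From mathcomp Require Import all_classical all_reals all_analysis measurable_realfun.
From mathcomp Require Import ring.
Set Implicit Arguments. Unset Strict Implicit. Unset Printing Implicit Defensive.
Import Order.TTheory GRing.Theory Num.Theory numFieldNormedType.Exports.
Local Open Scope classical_set_scope.
Local Open Scope ring_scope.

Section Shift.
Context {R : realType}.

Notation mu := ((@wlength R idfun)^*)%mu.

Lemma shift_oc (a x y : R) : (fun z : R => z + a)%R @` `]x, y]%classic = `]x + a, y + a]%classic.
Proof.
apply/seteqP; split => z.
  by move=> [w /=]; rewrite !in_itv /= => /andP[h1 h2] <-; rewrite ltrD2r lerD2r h1 h2.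
move=> /=; rewrite in_itv /= => /andP[h1 h2]; exists (z - a)%R; last by rewrite subrK.
by rewrite /= in_itv /= ltrBrDr lerBlDr h1 h2.
Qed.

Lemma wlength_shift (a x y : R) :
  wlength idfun ((fun z : R => z + a)%R @` `]x, y]%classic) = wlength idfun `]x, y]%classic.
Proof.
rewrite shift_oc !wlength_itv /= !lte_fin ltrD2r; case: ifP => // _.
by rewrite -!EFinB opprD addrACA subrr addr0.
Qed.

Local Open Scope ereal_scope.
Lemma mu_shift_le (a : R) (S : set R) : mu ((fun z : R => z + a)%R @` S) <= mu S.
Proof.
apply: le_ereal_inf_tmp => _ [A [mA SA] <-].
have hB k : exists p : R * R, A k = `]p.1, p.2]%classic.
  by have [[x y] _ <-] := mA k; exists (x, y).
pose p k := projT1 (cid (hB k)).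
have Ap k : A k = `]((p k).1), ((p k).2)]%classic by rewrite /p; case: cid.
apply: ereal_inf_lbound; exists (fun k => (fun z : R => z + a)%R @` A k).
  split.
    move=> k; rewrite Ap shift_oc.
    exact: is_ocitv.
  by move=> _ [z /SA [k _ Akz] <-]; exists k => //; exists z.
apply: eq_eseriesr => k _; rewrite Ap; exact: wlength_shift.
Qed.
End Shift.

Section Shift2.
Context {R : realType}.
Notation mu := ((@wlength R idfun)^*)%mu.
Definition sh (a : R) := fun z : R => (z + a)%R.

Lemma img_sh (a : R) (C : set R) : sh a @` C = sh (- a) @^-1` C.
Proof.
apply/seteqP; split => z.
  by move=> [w Cw <-]; rewrite /sh /= addrK.
by move=> Cz; exists (z - a)%R => //; rewrite /sh subrK.
Qed.

Lemma pre_shK (a : R) (C : set R) : sh a @^-1` (sh (- a) @^-1` C) = C.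
Proof. by apply/seteqP; split => z; rewrite /sh /= addrK. Qed.

Local Open Scope ereal_scope.
Lemma mu_pre_sh (a : R) (C : set R) : mu (sh a @^-1` C) = mu C.
Proof.
apply/eqP; rewrite eq_le; apply/andP; split.
  by have := @mu_shift_le R (-a) C; rewrite -/(sh (-a)) img_sh opprK.
have := @mu_shift_le R a (sh a @^-1` C); rewrite -/(sh a) img_sh.
by rewrite -{2}(opprK a) pre_shK.
Qed.

Lemma cara_pre_sh (a : R) (B : set R) : mu.-caratheodory B -> mu.-caratheodory (sh a @^-1` B).
Proof.
move=> hB X.
rewrite -{1}(pre_shK a X) mu_pre_sh (hB (sh (- a) @^-1` X)).
by rewrite -(mu_pre_sh a (_ `&` B)) -(mu_pre_sh a (_ `&` ~` B)) !preimage_setI pre_shK.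
Qed.

End Shift2.

Section Shift3.
Context {R : realType}.
Local Open Scope ereal_scope.
Lemma lam_pre_sh (a : R) (B : set (LR R)) : lam (sh a @^-1` B) = lam B.
Proof. exact: mu_pre_sh. Qed.
Lemma meas_pre_sh (a : R) (B : set (LR R)) : measurable B -> measurable (sh a @^-1` B : set (LR R)).
Proof. exact: cara_pre_sh. Qed.
End Shift3.

Section Base.
Context {R : realType}.
Local Notation T := (LR R).
Local Open Scope ereal_scope.

Lemma meas_LR (E : set R) : measurable E -> measurable (E : set T).
Proof. exact: sub_caratheodory. Qed.

Lemma lam_leb (E : set R) : lam (E : set T) = lebesgue_measure E.
Proof. reflexivity. Qed.

Lemma rhoY_ub (f : T -> \bar R) A : famA A -> \int[lam]_(x in A) f x <= rhoY f.
Proof. by move=> hA; apply: ereal_sup_ubound; exists A. Qed.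

Lemma rhoY_le (f : T -> \bar R) M :
  (forall A, famA A -> \int[lam]_(x in A) f x <= M) -> rhoY f <= M.
Proof. by move=> h; apply: ge_ereal_sup => _ [A hA <-]; exact: h. Qed.

Lemma famA0 : famA (set0 : set T).
Proof.
split => //; rewrite /lam measure0 lee_fin; exact: sqrtr_ge0.
Qed.

Lemma rhoY_ge0 (f : T -> \bar R) : 0 <= rhoY f.
Proof. by rewrite -(integral_set0 lam f); exact: rhoY_ub famA0. Qed.

Lemma famA_intro (A : set T) (x : R) : measurable A -> (0 < x)%R ->
  A `<=` [set y | (x <= toR y)%R] -> lam A <= (Num.sqrt x)%:E -> famA A.
Proof.
move=> mA x0 Ax hl; split => //.
  by move=> y /Ax /= xy; rewrite /pos /=; exact: lt_le_trans xy.
have [->|/set0P[y Ay]] := eqVneq A set0; first by rewrite /lam measure0 lee_fin sqrtr_ge0.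
apply: (le_trans hl); rewrite lee_fin ler_sqrt//; apply: lb_le_inf.
  by exists (toR y), y.
by move=> _ [z /Ax zx <-].
- by exists (toR y), y.
- by move=> _ [z /Ax zx <-]; rewrite (le_trans (ltW x0) zx).
Qed.

Lemma famA_inf (A : set T) y : famA A -> A y ->
  lam A <= (Num.sqrt (toR y))%:E.
Proof.
move=> [mA Apos hA] Ay; have y0 : (0 <= toR y)%R by exact/ltW/Apos.
apply: (le_trans hA); rewrite lee_fin ler_sqrt//.
apply: ge_inf; last by exists y.
by exists 0%R => _ [z /Apos /ltW z0 <-].
Qed.

End Base.


Section P3.
Context {R : realType}.
Local Notation T := (LR R).
Local Open Scope ereal_scope.

Definition ind (I : set T) : T -> \bar R := fun x => (\1_I x)%:E.

Lemma indic_ge0 (I : set T) x : (0 <= \1_I x :> R)%R.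
Proof. by rewrite indicE ler0n. Qed.

Lemma ind_nnmf (I : set T) : measurable I -> I `<=` pos -> nnmf (ind I).
Proof.
move=> mI Ipos; split.
- by apply/measurable_EFinP; exact: measurable_indic.
- by move=> x _; rewrite /ind lee_fin indic_ge0.
- move=> x npx; rewrite /ind indicE memNset //.
  by move=> /Ipos.
Qed.

Lemma absf_ind (I : set T) : absf (ind I) = ind I.
Proof. by apply/funext => x; rewrite /absf /ind gee0_abs// lee_fin indic_ge0. Qed.

Lemma int_ind (I A : set T) : measurable I -> measurable A ->
  \int[lam]_(x in A) ind I x = lam (I `&` A).
Proof. by move=> mI mA; rewrite /ind integral_indic. Qed.

Lemma lam_le (A B : set T) : measurable A -> measurable B -> A `<=` B -> lam A <= lam B.
Proof. by move=> mA mB AB; rewrite /lam le_measure// inE. Qed.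

Lemma rhoY_ind_le (I : set T) : measurable I -> rhoY (ind I) <= lam I.
Proof.
move=> mI; apply: rhoY_le => A [mA _ _]; rewrite int_ind//.
by apply: lam_le => //; first exact: measurableI; exact: subIsetl.
Qed.

Lemma lam_oc (x y : R) : (x <= y)%R -> lam (`]x, y]%classic : set T) = (y - x)%:E.
Proof.
move=> xy; rewrite lam_leb lebesgue_measure_itv /= lte_fin.
case: ltP => [//|yx]; have -> : y = x by apply/eqP; rewrite eq_le xy yx.
by rewrite subrr.
Qed.

Lemma not_ess_subRI : ~ ess_subRI (@rhoY R).
Proof.
move=> [sigma [_ [c [C [c0 C0 hcC]]] hsub]].
pose b : R := ((C / c) ^+ 2 + 1)%R.
have b1 : (1 <= b)%R by rewrite /b lerDr sqr_ge0.
have b0 : (0 < b)%R by exact: lt_le_trans ltr01 b1.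
pose a : R := (b ^+ 2)%R.
have a0 : (0 < a)%R by rewrite /a exprn_gt0.
have sqa : Num.sqrt a = b by rewrite /a sqrtr_sqr gtr0_norm.
have Csb : (C / c < Num.sqrt b)%R.
  rewrite -(@ltr_pXn2r _ 2)//; last by rewrite nnegrE sqrtr_ge0.
    by rewrite sqr_sqrtr ?(ltW b0)// /b ltrDl.
  by rewrite nnegrE divr_ge0// ltW.
pose I : set T := `]a%R, (a + b)%R]%classic.
pose J : set T := `]0%R, b%R]%classic.
pose F : set T := `]a%R, +oo[%classic.
have mI : measurable I by apply: meas_LR; exact: measurable_itv.
have mJ : measurable J by apply: meas_LR; exact: measurable_itv.
have mF : measurable F by apply: meas_LR; exact: measurable_itv.
have Ipos : I `<=` pos.
  by move=> x; rewrite /I /= in_itv /= => /andP[ax _]; rewrite /pos /= (lt_trans a0 ax).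
have Jpos : J `<=` pos by move=> x; rewrite /J /= in_itv /= => /andP[].
have Fpos : F `<=` pos.
  by move=> x; rewrite /F /= in_itv /= andbT => ax; rewrite /pos /= (lt_trans a0 ax).
have lamI : lam I = b%:E by rewrite lam_oc ?lerDl ?(ltW b0)// addrAC subrr add0r.
have famI : famA I.
  apply: (@famA_intro _ _ a) => //.
    by move=> x; rewrite /I /= in_itv /= => /andP[/ltW].
  by rewrite lamI sqa.
have rIge : b%:E <= rhoY (ind I).
  by rewrite -lamI -{1}(setIid I) -int_ind//; exact: rhoY_ub.
have rJle : rhoY (ind J) <= (Num.sqrt b)%:E.
  apply: rhoY_le => A hA; have [mA _ _] := hA; rewrite int_ind//.
  have [[y Ay yb]|] := pselect (exists2 y, A y & (toR y <= b)%R).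
    apply: (le_trans (lam_le _ _ _)); [exact: measurableI|exact: mA|exact: subIsetr|].
    apply: (le_trans (famA_inf hA Ay)); rewrite lee_fin ler_sqrt ?(ltW b0)//.
  move=> nA; have -> : J `&` A = set0.
    apply/seteqP; split => // x [Jx Ax]; apply: nA; exists x => //.
    by move: Jx; rewrite /J /= in_itv /= => /andP[].
  by rewrite /lam measure0 lee_fin sqrtr_ge0.
have nI := ind_nnmf mI Ipos.
have nJ := ind_nnmf mJ Jpos.
have MOa : MO F (sh a).
  split.
  - split.
    + move=> x; rewrite /pos /F /= in_itv /= andbT => x0.
      by rewrite /sh ltrDr.
    + by move=> x y _ _; rewrite /sh; exact: addIr.
    + move=> y; rewrite /F /= in_itv /= andbT => ay; exists (y - a)%R.
        by rewrite /pos /= subr_gt0.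
      by rewrite /sh subrK.
  - by move=> x y _ _; rewrite /sh /toR ltrD2r.
  - move=> B mB BF.
    have -> : pos `&` sh a @^-1` B = sh a @^-1` B.
      apply/seteqP; split => [x [] //|x Bx]; split => //.
      have := BF _ Bx; rewrite /F /sh /= in_itv /= andbT => h.
      by rewrite /pos /=; rewrite ltrDr in h.
    by split; [exact: meas_pre_sh | exact: lam_pre_sh].
  - move=> B mB _; rewrite img_sh.
    by split; [exact: meas_pre_sh | exact: lam_pre_sh].
have inI : in_space sigma (ind I).
  split; [by case: nI | by case: nI|].
  rewrite absf_ind; apply: (le_lt_trans (hcC _ nI).2).
  apply: (@le_lt_trans _ _ (C%:E * b%:E)); last by rewrite -EFinM ltry.
  by rewrite lee_wpmul2l ?lee_fin ?(ltW C0)// -lamI; exact: rhoY_ind_le.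
have eJ : (fun x => if `[< pos x >] then ind I (sh a x) else 0) = ind J.
  apply/funext => x; case: asboolP => [px|npx].
    rewrite /ind /sh !indicE; congr ((_ : bool)%:R)%:E.
    rewrite /I /J !mem_setE /= !in_itv /= ltrDr [(a + b)%R]addrC lerD2r.
    by rewrite /pos /= in px; rewrite px.
  rewrite /ind indicE memNset //; by move=> /Jpos.
have eI : (fun x => if `[< F x >] then ind I x else 0) = ind I.
  apply/funext => x; case: asboolP => // nFx.
  rewrite /ind indicE memNset //; move=> Ix; apply: nFx.
  by move: Ix; rewrite /I /F /= !in_itv /= andbT => /andP[].
have := hsub F (sh a) (ind I) mF Fpos MOa inI.
rewrite eJ eI !absf_ind => hs.
have h1 := (hcC _ nI).1; have h2 := (hcC _ nJ).2.
have : (c * b <= C * Num.sqrt b)%R.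
  rewrite -lee_fin !EFinM.
  apply: (@le_trans _ _ (c%:E * rhoY (ind I))).
    by apply: lee_wpmul2l; rewrite ?lee_fin ?(ltW c0).
  apply: (le_trans h1); rewrite -hs; apply: (le_trans h2).
  by apply: lee_wpmul2l; rewrite ?lee_fin ?(ltW C0).
apply/negP; rewrite -ltNge.
have sb0 : (0 < Num.sqrt b)%R by rewrite sqrtr_gt0.
move: Csb; rewrite ltr_pdivrMr// => hC.
have -> : (c * b = (Num.sqrt b * c) * Num.sqrt b)%R.
  by rewrite [RHS]mulrAC -expr2 sqr_sqrtr ?(ltW b0)// mulrC.
by rewrite ltr_pM2r.
Qed.
End P3.


Section P1.
Context {R : realType}.
Local Notation T := (LR R).

Definition Dk (k : nat) : set T := `](k.+2%:R)^-1, (k.+1%:R)^-1]%classic.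
Definition Ek (k : nat) : set T := `[k.+1%:R, k.+2%:R[%classic.

Lemma cover_pos (y : T) : pos y -> (exists k, Dk k y) \/ (exists k, Ek k y).
Proof.
rewrite /pos /toR => y0.
have [y1|y1] := leP y 1%R.
  left; set z := (y^-1)%R.
  have z1 : (1 <= z)%R by rewrite /z invr_ge1 ?unitf_gt0.
  have z0 : (0 < z)%R := lt_le_trans ltr01 z1.
  have := truncn_itv (ltW z0); have := truncn_gt0 z; rewrite z1.
  case: (Num.truncn z) => // k _ /andP[kz zk].
  exists k; rewrite /Dk /= in_itv /=; apply/andP; split.
    by rewrite -(invrK y) ltf_pV2 ?posrE ?invr_gt0.
  by rewrite -(invrK y) lef_pV2 ?posrE ?invr_gt0.
right.
have y1' : (1 <= y)%R by exact: ltW.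
have := truncn_itv (ltW y0); have := truncn_gt0 y; rewrite y1'.
case: (Num.truncn y) => // k _ /andP[kz zk].
by exists k; rewrite /Ek /= in_itv /= kz zk.
Qed.

Lemma le_sqrt_id (x : R) : (0 <= x)%R -> (x <= 1)%R -> (x <= Num.sqrt x)%R.
Proof.
move=> x0 x1; rewrite -{1}(sqr_sqrtr x0) expr2.
have s0 := sqrtr_ge0 x.
apply: ler_piMr => //; rewrite -sqrtr1 ler_sqrt//.
Qed.

Local Open Scope ereal_scope.

Lemma famA_Dk k : famA (Dk k).
Proof.
set p : R := k.+1%:R; set q : R := k.+2%:R.
have p1 : (1 <= p)%R by rewrite /p ler1n.
have p0 : (0 < p)%R := lt_le_trans ltr01 p1.
have q0 : (0 < q)%R by rewrite /q ltr0n.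
have qp : q = (p + 1)%R by rewrite /p /q -natr1.
have iq : (q^-1 <= p^-1)%R by rewrite lef_pV2 ?posrE// qp lerDl.
apply: (@famA_intro _ _ (q^-1)).
- by apply: meas_LR; exact: measurable_itv.
- by rewrite invr_gt0.
- by move=> y; rewrite /Dk /= in_itv /= => /andP[/ltW].
rewrite lam_oc // lee_fin.
have -> : (p^-1 - q^-1 = (p * q)^-1)%R.
  rewrite qp; field; apply/andP; split; rewrite ?lt0r_neq0// -qp//.
apply: (le_trans _ (le_sqrt_id _ _)).
- by rewrite lef_pV2 ?posrE ?mulr_gt0// ler_peMl// ltW.
- by rewrite invr_ge0 ltW.
- by rewrite invr_le1 ?unitf_gt0// qp lerDr ltW.
Qed.

Lemma famA_Ek k : famA (Ek k).
Proof.
apply: (@famA_intro _ _ (k.+1%:R)).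
- by apply: meas_LR; exact: measurable_itv.
- by rewrite ltr0n.
- by move=> y; rewrite /Ek /= in_itv /= => /andP[].
rewrite lam_leb lebesgue_measure_itv /= lte_fin ltr_nat ltnS leqnn.
rewrite -EFinD lee_fin -natrB // subSnn -{1}sqrtr1 ler_sqrt ?ler1n//.
Qed.

Lemma cover_neg (P : set T) : (forall A, famA A -> lam.-negligible (A `&` P)) ->
  lam.-negligible (pos `&` P).
Proof.
move=> h.
apply: (@negligibleS _ _ _ lam ((\bigcup_k (Dk k `&` P)) `|` (\bigcup_k (Ek k `&` P)))).
  move=> y [/cover_pos [[k Dy]|[k Ey]] Py]; [left|right]; by exists k.
apply: negligibleU; apply: negligible_bigcup => k; apply: h.
  exact: famA_Dk.
exact: famA_Ek.
Qed.

Lemma mpos : measurable (pos : set T).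
Proof.
have -> : (pos : set T) = (`]0%R, +oo[%classic : set R).
  by apply/seteqP; split => x; rewrite /pos /= in_itv /= andbT.
by apply: meas_LR; exact: measurable_itv.
Qed.

Lemma nnmfA (f : T -> \bar R) A : nnmf f -> famA A ->
  measurable_fun A f /\ (forall x, A x -> 0 <= f x).
Proof.
move=> [mf f0 _] [mA Apos _]; split.
  exact: measurable_funS mpos Apos mf.
by move=> x /Apos; exact: f0.
Qed.

Lemma rhoY_fn : function_norm (@rhoY R).
Proof.
split.
- by move=> f _; exact: rhoY_ge0.
- move=> f g nf ng; apply: rhoY_le => A hA.
  have [mfA f0] := nnmfA nf hA; have [mgA g0] := nnmfA ng hA.
  have [mA _ _] := hA.
  rewrite ge0_integralD//; apply: leeD; exact: rhoY_ub.
- move=> a f a0 nf; rewrite /rhoY -ereal_supZl//; last first.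
    by apply/set0P; exists (\int[lam]_(x in set0) f x); exists set0 => //; exact: famA0.
  rewrite image_comp; congr ereal_sup; apply: eq_imagel => A hA /=.
  have [mfA f0] := nnmfA nf hA; have [mA _ _] := hA.
  by rewrite ge0_integralZl// lee_fin.
- move=> f nf; split => [r0|hae].
    have hn : lam.-negligible (pos `&` [set x | f x <> 0]).
    apply: cover_neg => A hA.
    have [mfA f0] := nnmfA nf hA; have [mA _ _] := hA.
    have i0 : \int[lam]_(x in A) f x = 0.
      apply/eqP; rewrite eq_le; apply/andP; split; last exact: integral_ge0.
      by rewrite -r0; exact: rhoY_ub.
    have : \int[lam]_(x in A) `|f x| = 0.
      by rewrite -i0; apply: eq_integral => x /[!inE] Ax; rewrite gee0_abs// f0.
    move/(ae_eq_integral_abs lam mA mfA) => [N [mN N0 sN]].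
    by exists N; split => // x [Ax fx]; apply: sN => /= /(_ Ax).
    by apply: negligibleS hn => x /= /not_implyP.
  apply/eqP; rewrite eq_le rhoY_ge0 andbT; apply: rhoY_le => A hA.
  have [mfA f0] := nnmfA nf hA; have [mA Apos _] := hA.
  rewrite (@ae_eq_integral _ _ _ lam A (cst 0) f mA mfA); last 2 first.
  - exact: measurable_cst.
  - move: hae; apply: filterS => x hx Ax; exact: hx (Apos _ Ax).
  by rewrite integral0.
Qed.
End P1.


Section Seq.
Context {R : realType}.
Local Open Scope ereal_scope.

Lemma term_le_nneseries (t : nat -> \bar R) j : (forall i, 0 <= t i) ->
  t j <= \sum_(i <oo) t i.
Proof.
move=> t0; apply: le_trans (nneseries_lim_ge j.+1 _) => //.
rewrite big_nat_recr//=; apply: leeDr => //.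
by apply: sume_ge0 => i _.
Qed.

Lemma cvg_fin_seq (a : nat -> \bar R) : a 0%N \is a fin_num ->
  (\sum_(j <oo) `|a j.+1 - a j|) \is a fin_num ->
  exists L : R, a @ \oo --> L%:E.
Proof.
move=> a0 sf.
have sl : \sum_(j <oo) `|a j.+1 - a j| < +oo.
  by move: sf; rewrite fin_numE => /andP[_]; rewrite ltey.
have tf j : `|a j.+1 - a j| \is a fin_num.
  rewrite ge0_fin_numE//; apply: le_lt_trans sl.
  by apply: (@term_le_nneseries (fun i => (`|a i.+1 - a i|)%E) j) => i.
have af j : a j \is a fin_num.
  elim: j => // j ih; have := tf j; rewrite abse_fin_num fin_numB.
  by case/andP.
pose r : R^nat := fun j => fine (a j).
have ar j : a j = (r j)%:E by rewrite /r fineK.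
pose D : R^nat := fun j => (r j.+1 - r j)%R.
have cD : cvgn (series D).
  apply: normed_cvg; apply: nnseries_is_cvg => //.
    by move=> i; rewrite /= normr_ge0.
  apply: le_lt_trans sl; rewrite le_eqVlt; apply/orP; left; apply/eqP.
  by congr (limn _); apply/funext => n; apply: eq_bigr => i _; rewrite !ar -EFinB.
have rE n : r n = (series D n + r 0%N)%R.
  by rewrite /series /= /D telescope_sumr// subrK.
have cr : cvgn r.
  rewrite (_ : r = (fun n => series D n + r 0%N)%R); last exact/funext.
  by apply: is_cvgD => //; exact: is_cvg_cst.
exists (limn r); apply: cvg_EFin; first by apply: nearW => n; exact: af.
rewrite (_ : fine \o a = r)//.
Qed.
End Seq.

Section Util.
Context {R : realType}.
Local Open Scope ereal_scope.

Lemma liminf_le (s : nat -> \bar R) (M : \bar R) N :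
  (forall k, (N <= k)%N -> s k <= M) -> limn_einf s <= M.
Proof.
move=> h; rewrite limn_einf_lim; apply: lime_le; first exact: is_cvg_einfs.
apply: nearW => m; apply: le_trans (h (maxn m N) (leq_maxr _ _)).
by apply: ereal_inf_lbound; exists (maxn m N) => //=; rewrite leq_maxl.
Qed.

Lemma tri_abs (a b : \bar R) : b \is a fin_num -> `|b| <= `|a - b| + `|a|.
Proof.
move: a b => [a| |] [b| |] //= _.
- have := ler_normB a (a - b)%R; rewrite (_ : (a - (a - b))%R = b); last by rewrite opprB addrC subrK.
  move=> h.
  by rewrite -EFinD lee_fin [X in (_ <= X)%R]addrC.
- by rewrite leey.
- by rewrite leey.
Qed.
End Util.


Section Sub.
Context {R : realType}.
Local Open Scope ereal_scope.

Lemma cauchy_subseq (rh : nat -> nat -> \bar R) (d : nat -> R) :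
  (forall e : R, (0 < e)%R -> exists N : nat, forall m n : nat, (N <= m)%N -> (N <= n)%N ->
      rh n m <= e%:E) ->
  (forall k, (0 < d k)%R) ->
  exists phi : nat -> nat, [/\ (forall k, k <= phi k)%N, (forall k, phi k <= phi k.+1)%N &
    forall k m n, (phi k <= m)%N -> (phi k <= n)%N -> rh n m <= (d k)%:E].
Proof.
move=> hC hd.
have hN k := hC (d k) (hd k).
pose N k := projT1 (cid (hN k)).
have HN k : forall m n, (N k <= m)%N -> (N k <= n)%N -> rh n m <= (d k)%:E.
  by rewrite /N; case: cid.
exists (fun k => \max_(i < k.+1) N i + k)%N; split.
- by move=> k; exact: leq_addl.
- move=> k; apply: leq_add => //.
  by rewrite [X in (_ <= X)%N]big_ord_recr /= leq_maxl.
- move=> k m n km kn; apply: HN.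
    apply: leq_trans km; apply: leq_trans (leq_addr _ _).
    exact: (@leq_bigmax_cond _ _ (fun i : 'I_k.+1 => N i) ord_max).
  apply: leq_trans kn; apply: leq_trans (leq_addr _ _).
  exact: (@leq_bigmax_cond _ _ (fun i : 'I_k.+1 => N i) ord_max).
Qed.
End Sub.

Section Banach.
Context {R : realType}.
Local Notation T := (LR R).
Local Open Scope ereal_scope.

Lemma geo_sum : \sum_(j <oo) ((1 / (2 ^ j.+1)%:R)%R)%:E = (1%:E : \bar R).
Proof.
have := @cvg_geometric_eseries_half R 1 0.
rewrite expr0 divr1 => h.
rewrite -(cvg_lim _ h) //; congr (limn _); apply/funext => n.
by rewrite /eseries; apply: eq_bigr => j _; rewrite addn1.
Qed.

Lemma rhoY_banach : banach (@rhoY R).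
Proof.
move=> u hu hC.
pose d (k : nat) : R := (1 / (2 ^ k.+1)%:R)%R.
have d0 k : (0 < d k)%R by rewrite /d divr_gt0 // ltr0n expn_gt0.
have [phi [phik phiS phiC]] :=
  @cauchy_subseq R (fun n m => rhoY (absf (fun x => u n x - u m x))) d hC d0.
pose v k := u (phi k).
pose w j := fun x => `|v j.+1 x - v j x|.
have hw j : rhoY (w j) <= (d j)%:E by exact: phiC.
have mu_ n : measurable_fun pos (u n) by case: (hu n).
have mw j : measurable_fun pos (w j).
  apply: (@measurableT_comp _ _ _ _ _ _ abse) => //.
  by apply: emeasurable_funB; apply: mu_.
have w0 j x : 0 <= w j x by exact: abse_ge0.
pose g x := \sum_(j <oo) w j x.
have g0 x : 0 <= g x by apply: nneseries_ge0.
have mg : measurable_fun pos g.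
  by apply: ge0_emeasurable_sum.
have intg A : famA A -> \int[lam]_(x in A) g x <= 1.
  move=> hA; have [mA Apos _] := hA.
  rewrite integral_nneseries//; last by move=> n; exact: measurable_funS mpos Apos (mw n).
  rewrite -geo_sum; apply: lee_nneseries => // n _.
    by move=> _; apply: integral_ge0 => x _; exact: w0.
  by apply: le_trans (hw n); exact: rhoY_ub.
have negB : lam.-negligible (pos `&` [set x | ~ (v 0%N x \is a fin_num /\ g x \is a fin_num)]).
  apply: cover_neg => A hA; have [mA Apos _] := hA.
  have iv : lam.-integrable A (v 0%N).
    apply/integrableP; split; first exact: measurable_funS mpos Apos (mu_ _).
    apply: le_lt_trans (rhoY_ub _ hA) _; by case: (hu (phi 0%N)).
  have ig : lam.-integrable A g.
    apply/integrableP; split; first exact: measurable_funS mpos Apos mg.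
    apply: (@le_lt_trans _ _ 1%E); last exact: ltry.
    apply: le_trans (intg A hA); rewrite le_eqVlt; apply/orP; left; apply/eqP.
    by apply: eq_integral => x _; rewrite gee0_abs.
  have [N1 [mN1 N10 sN1]] := integrable_ae mA iv.
  have [N2 [mN2 N20 sN2]] := integrable_ae mA ig.
  exists (N1 `|` N2); split; [exact: measurableU| |].
    by rewrite /lam measureU0.
  move=> x [Ax /not_andP[h|h]]; [left; apply: sN1|right; apply: sN2] => /=;
    by move/(_ Ax).
pose G : set T := [set x | pos x /\ (v 0%N x \is a fin_num /\ g x \is a fin_num)].
have mG : measurable G.
  have -> : G = (pos `&` [set x | v 0%N x \is a fin_num]) `&` (pos `&` [set x | g x \is a fin_num]).
    by apply/seteqP; split => x /=; [move=> [px [h1 h2]]|move=> [[px h1] [_ h2]]].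
  apply: measurableI; apply: emeasurable_fin_num => //; [exact: mpos|exact: mu_|exact: mpos].
have Gpos : G `<=` pos by move=> x [].
have cvG x : G x -> exists L : R, (fun k => v k x) @ \oo --> L%:E.
  by move=> [_ [h1 h2]]; apply: cvg_fin_seq.
pose f := (fun x => limn_esup (fun k => v k x)) \_ G.
have fG x : G x -> exists L : R, (fun k => v k x) @ \oo --> L%:E /\ f x = L%:E.
  move=> Gx; have [L hL] := cvG x Gx; exists L; split => //.
  by rewrite /f patchE mem_set// (cvg_limn_einf_sup hL).2.
have fout x : ~ G x -> f x = 0 by move=> nG; rewrite /f patchE memNset.
have ffin x : f x \is a fin_num.
  have [Gx|nG] := pselect (G x); last by rewrite fout.
  by have [L [_ ->]] := fG x Gx.
have mf : measurable_fun pos f.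
  apply: (emeasurable_fun_cvg (fun k => v k \_ G)).
    move=> m; apply: measurable_funS (measurableT) (subsetT _) _.
    apply/(measurable_restrictT _ _).1 => //.
    exact: measurable_funS mpos Gpos (mu_ _).
  move=> x _; have [Gx|nG] := pselect (G x).
    have [L [hL ->]] := fG x Gx.
    by rewrite (_ : (fun k => (v k \_ G) x) = fun k => v k x)//; apply/funext => k; rewrite patchE mem_set.
  rewrite fout// (_ : (fun k => (v k \_ G) x) = fun k => 0); first exact: cvg_cst.
  by apply/funext => k; rewrite patchE memNset.
have supp : supported f by move=> x npx; apply: fout => -[].
have est : forall e : R, (0 < e)%R -> exists N : nat, forall n, (N <= n)%N ->
    forall A, famA A -> \int[lam]_(x in A) `|u n x - f x| <= e%:E.
  move=> e e0; have [N hN] := hC e e0; exists N => n nN A hA.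
  have [mA Apos _] := hA.
  pose h k := fun x => `|u n x - v k x|.
  have mh k : measurable_fun A (h k).
    apply: (@measurableT_comp _ _ _ _ _ _ abse) => //.
    by apply: emeasurable_funB; apply: measurable_funS mpos Apos (mu_ _).
  have mli : measurable_fun A (fun x => limn_einf (h ^~ x)).
    rewrite /limn_einf.
    apply: (@measurableT_comp _ _ _ _ _ _ (@oppe R)); first exact: oppe_measurable.
    have := @measurable_fun_limn_esup _ _ R A (fun k x => - h k x).
    apply => k; apply: measurableT_comp; [exact: oppe_measurable | exact: mh].
  have mabs : measurable_fun A (fun x => `|u n x - f x|).
    apply: measurableT_comp; first exact: abse_measurable.
    by apply: emeasurable_funB; apply: measurable_funS mpos Apos _; [exact: mu_|exact: mf].
  have -> : \int[lam]_(x in A) `|u n x - f x| = \int[lam]_(x in A) limn_einf (h ^~ x).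
    apply: ae_eq_integral; [exact: mA|exact: mabs|exact: mli|].
    apply: negligibleS negB => x /= /not_implyP [Ax hx]; split; first exact: Apos.
    move=> [v0 g0']; apply: hx.
    have [L [hL ->]] := fG x (conj (Apos _ Ax) (conj v0 g0')).
    apply/esym; apply: (cvg_limn_einf_sup _).1.
    apply: cvg_abse; apply: cvgeB; last exact: hL; last exact: cvg_cst.
    by case: (u n x).
  have h0 k x : A x -> 0 <= h k x by move=> _; exact: abse_ge0.
  apply: le_trans (fatou lam mA mh h0) _.
  apply: (@liminf_le _ _ _ N) => k Nk.
  apply: le_trans (rhoY_ub (h k) hA) _.
  apply: hN => //; exact: leq_trans Nk (phik k).
have fin : rhoY (absf f) < +oo.
  have [N1 hN1] := est 1%R ltr01.
  apply: (@le_lt_trans _ _ (1%:E + rhoY (absf (u N1)))); last first.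
    apply: lte_add_pinfty; first exact: ltry.
    by case: (hu N1).
  apply: rhoY_le => A hA; have [mA Apos _] := hA.
  have mu1 : measurable_fun A (u N1) by exact: measurable_funS mpos Apos (mu_ _).
  have mfA : measurable_fun A f by exact: measurable_funS mpos Apos mf.
  have m1 : measurable_fun A (fun x => `|u N1 x - f x|).
    by apply: measurableT_comp; [exact: abse_measurable | exact: emeasurable_funB].
  have m2 : measurable_fun A (fun x => `|u N1 x|).
    by apply: measurableT_comp; [exact: abse_measurable | exact: mu1].
  apply: (@le_trans _ _ (\int[lam]_(x in A) (`|u N1 x - f x| + `|u N1 x|))).
    apply: ge0_le_integral; [exact: mA|by move=> x _; exact: abse_ge0|by apply: measurableT_comp; [exact: abse_measurable|exact: mfA]| |].
      by apply: emeasurable_funD; [exact: m1|exact: m2].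
    by move=> x _; exact: tri_abs (ffin x).
  rewrite ge0_integralD; [|exact: mA|by move=> x _; exact: abse_ge0|exact: m1|by move=> x _; exact: abse_ge0|exact: m2].
  apply: leeD; first exact: (hN1 N1 (leqnn _) A hA).
  exact: (rhoY_ub (absf (u N1)) hA).
exists f; split; first by split.
move=> e e0; have [N hN] := est e e0; exists N => n nN.
apply: rhoY_le => A hA; exact: hN.
Qed.
End Banach.


Theorem mainTheorem4 (R : realType) :
  [/\ function_norm (@rhoY R), banach (@rhoY R) & ~ ess_subRI (@rhoY R)].
Proof. by split; [exact: rhoY_fn | exact: rhoY_banach | exact: not_ess_subRI]. Qed.
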